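(* Let $P=(X,\leq_P)$ be a finite poset and let $M\subseteq X$. For every down-set $N$ of the induced sub-poset $P|_M$ define $$M{\updownarrow}_P N := {\uparrow}_P(M\setminus N)\ \cup\ {\downarrow}_P N,$$ and let $$\mathcal{D}_{M,N}(P):=\{D\in\mathcal{D}(P) : D\cap M=N\}.$$ Then for every $N\in\mathcal{D}(P|_M)$ the mapping $$\phi_{M,N}:\mathcal{D}_{M,N}(P)\to\mathcal{D}\big(P-M{\updownarrow}_P N\big),\qquad D\mapsto D\setminus {\downarrow}_P N,$$ is an order isomorphism (with respect to set inclusion), with inverse $\phi_{M,N}^{-1}(D')=D'\cup{\downarrow}_P N$ for all $D'\in\mathcal{D}(P-M{\updownarrow}_P N)$. In consequence, $$d(P)=\sum_{N\in\mathcal{D}(P|_M)} d\big(P-M{\updownarrow}_P N\big).$$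
   Context: For a finite poset $P=(X,\leq_P)$: a subset $Y\subseteq X$ is a down-set if $x\leq_P y$ and $y\in Y$ imply $x\in Y$. $\mathcal{D}(P)$ denotes the set of down-sets of $P$ and $d(P):=\#\mathcal{D}(P)$. For $y\in X$, ${\downarrow}_P y=\{x\in X: x\leq_P y\}$, ${\uparrow}_P y=\{x\in X: y\leq_P x\}$, and for $V\subseteq X$, ${\downarrow}_P V=\bigcup_{v\in V}{\downarrow}_P v$, ${\uparrow}_P V=\bigcup_{v\in V}{\uparrow}_P v$. For $Y\subseteq X$, $P|_Y$ is the induced sub-poset $(Y,\leq_P\cap(Y\times Y))$, and $P-Y$ denotes $P|_{X\setminus Y}$. *)

(* Defs.v *)
From mathcomp Require Import all_boot all_order.
Set Implicit Arguments. Unset Strict Implicit. Unset Printing Implicit Defensive.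
Import Order.Theory.
Local Open Scope order_scope.

(* A finite poset P = (X, <=_P) is a finPOrderType T, with X = the whole of T.
   Subsets of X are {set T}; the induced sub-poset P|_Y is represented by Y. *)

Section Downsets.
Context {d : Order.disp_t} {T : finPOrderType d}.

Definition downset_in (Y D : {set T}) : bool :=
  (D \subset Y) &&
  [forall x, forall y, [&& x \in Y, y \in D & x <= y] ==> (x \in D)].

Definition downsets (Y : {set T}) : {set {set T}} := [set D | downset_in Y D].

Definition dnum (Y : {set T}) : nat := #|downsets Y|.

Definition down1 (y : T) : {set T} := [set x | x <= y].
Definition up1 (y : T) : {set T} := [set x | y <= x].
Definition down (V : {set T}) : {set T} := \bigcup_(v in V) down1 v.
Definition up (V : {set T}) : {set T} := \bigcup_(v in V) up1 v.

Definition updown (M N : {set T}) : {set T} := up (M :\: N) :|: down N.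

Definition DMN (M N : {set T}) : {set {set T}} :=
  [set D in downsets setT | D :&: M == N].

Definition phiMN (N D : {set T}) : {set T} := D :\: down N.
Definition phiMN_inv (N D' : {set T}) : {set T} := D' :|: down N.

End Downsets.

(* Main.v *)
Require Import Defs.
From mathcomp Require Import all_boot all_order.
Import Order.Theory.
Local Open Scope order_scope.

Section Aux.
Context {d : Order.disp_t} {T : finPOrderType d}.
Implicit Types (M N D Y : {set T}).

Lemma downsetP Y D : reflect (D \subset Y /\
   forall x y, x \in Y -> y \in D -> x <= y -> x \in D) (downset_in Y D).
Proof.
apply: (iffP andP) => [[H1 /forallP H2]|[H1 H2]]; split => //.
  move=> x y xY yD xy; have /forallP/(_ y) := H2 x.
  by rewrite xY yD xy /= => ->.
apply/forallP => x; apply/forallP => y; apply/implyP => /and3P[xY yD xy].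
exact: H2 xY yD xy.
Qed.

Lemma in_down (V : {set T}) (x : T) : reflect (exists2 v, v \in V & x <= v) (x \in down V).
Proof.
apply: (iffP bigcupP) => [[v vV]|[v vV xv]]; first by rewrite inE => xv; exists v.
by exists v => //; rewrite inE.
Qed.

Lemma in_up (V : {set T}) (x : T) : reflect (exists2 v, v \in V & v <= x) (x \in up V).
Proof.
apply: (iffP bigcupP) => [[v vV]|[v vV xv]]; first by rewrite inE => xv; exists v.
by exists v => //; rewrite inE.
Qed.

Lemma in_updown M N x :
  x \in updown M N = (x \in up (M :\: N)) || (x \in down N).
Proof. by rewrite /updown inE. Qed.

Lemma inDMN M N D : D \in DMN M N = downset_in setT D && (D :&: M == N).
Proof. by rewrite /DMN /downsets !inE. Qed.

Lemma in_downsets Y D : (D \in downsets Y) = downset_in Y D.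
Proof. by rewrite /downsets inE. Qed.

End Aux.

Theorem theorem1 (d : Order.disp_t) (T : finPOrderType d) (M : {set T}) :
  (forall N : {set T}, N \in downsets M ->
     (* phi maps D_{M,N}(P) into D(P - M updown N) *)
     (forall D, D \in DMN M N -> phiMN N D \in downsets (~: updown M N)) /\
     (* the inverse maps D(P - M updown N) into D_{M,N}(P) *)
     (forall D', D' \in downsets (~: updown M N) -> phiMN_inv N D' \in DMN M N) /\
     (* they are mutually inverse *)
     (forall D, D \in DMN M N -> phiMN_inv N (phiMN N D) = D) /\
     (forall D', D' \in downsets (~: updown M N) -> phiMN N (phiMN_inv N D') = D') /\
     (* phi is an order embedding w.r.t. inclusion *)
     (forall D1 D2, D1 \in DMN M N -> D2 \in DMN M N ->
        (D1 \subset D2) = (phiMN N D1 \subset phiMN N D2))) /\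
  dnum [set: T] = (\sum_(N in downsets M) dnum (~: updown M N))%N.
Proof.
have main : forall N : {set T}, N \in downsets M ->
     (forall D, D \in DMN M N -> phiMN N D \in downsets (~: updown M N)) /\
     (forall D', D' \in downsets (~: updown M N) -> phiMN_inv N D' \in DMN M N) /\
     (forall D, D \in DMN M N -> phiMN_inv N (phiMN N D) = D) /\
     (forall D', D' \in downsets (~: updown M N) -> phiMN N (phiMN_inv N D') = D') /\
     (forall D1 D2, D1 \in DMN M N -> D2 \in DMN M N ->
        (D1 \subset D2) = (phiMN N D1 \subset phiMN N D2)).
  move=> N; rewrite in_downsets => /downsetP[NM Ndown].
  have dND : forall D, D \in DMN M N -> down N \subset D.
    move=> D; rewrite inDMN => /andP[/downsetP[_ HD] /eqP DM].
    apply/subsetP => x /in_down[v vN xv].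
    apply: (HD x v (in_setT x) _ xv).
    by move: vN; rewrite -DM inE => /andP[].
  split.
    move=> D; rewrite inDMN => /andP[/downsetP[_ HD] /eqP DM].
    rewrite in_downsets; apply/downsetP; split.
      apply/subsetP => x; rewrite !inE ?in_updown negb_or => /andP[xnd xD].
      rewrite xnd andbT; apply/negP => /in_up[m]; rewrite inE => /andP[mN mM] mx.
      have : m \in D by apply: (HD m x (in_setT m)).
      by move=> mD; move: mN; rewrite -DM inE mD mM.
    move=> x y; rewrite !inE ?in_updown negb_or => /andP[_ xnd] /andP[_ yD] xy.
    by rewrite xnd; apply: (HD x y (in_setT x)).
  split.
    move=> D'; rewrite in_downsets => /downsetP[D'U HD'].
    rewrite inDMN; apply/andP; split.
      apply/downsetP; split; first exact: subsetT.
      move=> x y _; rewrite !inE => /orP[yD'|yN] xy.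
        case xN: (x \in down N); first by rewrite orbT. rewrite orbF.
        apply: (HD' x y) => //.
        rewrite !inE ?in_updown xN ?orbF; apply/negP => /in_up[m mMN mx].
        have := subsetP D'U y yD'; rewrite !inE ?in_updown negb_or => /andP[/negP []].
        by apply/in_up; exists m => //; apply: le_trans xy.
      apply/orP; right; apply/in_down; case/in_down: yN => v vN yv.
      by exists v => //; apply: le_trans yv.
    apply/eqP/setP => x; rewrite !inE.
    apply/idP/idP.
      case/andP => /orP[xD'|/in_down[v vN xv]] xM.
        have := subsetP D'U x xD'; rewrite !inE ?in_updown negb_or => /andP[xu _].
        apply/negPn/negP => xN; move/negP: xu; apply; apply/in_up.
        by exists x; rewrite // inE xN.
      exact: (Ndown x v).
    move=> xN; rewrite (subsetP NM x xN) andbT; apply/orP; right.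
    by apply/in_down; exists x.
  split.
    move=> D DD; rewrite /phiMN /phiMN_inv.
    apply/setP => x; rewrite !inE; case xN: (x \in down N) => /=; rewrite ?andbT ?orbF //.
    by rewrite (subsetP (dND D DD) x xN).
  split.
    move=> D'; rewrite in_downsets => /downsetP[D'U _].
    rewrite /phiMN /phiMN_inv; apply/setP => x; rewrite !inE.
    case xN: (x \in down N); rewrite /= ?andbT ?orbF //.
    apply/esym/negbTE/negP => xD'; have := subsetP D'U x xD'.
    by rewrite !inE ?in_updown xN orbT.
  move=> D1 D2 H1 H2; rewrite /phiMN; apply/idP/idP.
    by move=> S; apply: setSD.
  move=> S; apply/subsetP => x xD1.
  case xN: (x \in down N); first exact: (subsetP (dND D2 H2) x xN).
  by have := subsetP S x; rewrite !inE xN xD1 => /(_ isT) /andP[].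
split; first exact: main.
rewrite /dnum -sum1_card.
rewrite (partition_big (fun D => D :&: M) (fun N => N \in downsets M)); last first.
  move=> D; rewrite in_downsets => /downsetP[_ HD]; rewrite in_downsets; apply/downsetP; split.
    exact: subsetIr.
  move=> x y xM; rewrite !inE => /andP[yD _] xy; rewrite xM andbT.
  by apply: (HD x y (in_setT x)).
apply: eq_bigr => N NM.
have [P1 [P2 [P3 [P4 _]]]] := main N NM.
rewrite sum1dep_card.
have -> : #|[set D | (D \in downsets [set: T]) && (D :&: M == N)]| = #|DMN M N|.
  by apply: eq_card => D; rewrite !inE.
rewrite -(card_in_imset (f := phiMN N) (D := DMN M N)); last first.
  by move=> D1 D2 H1 H2 E; rewrite -(P3 D1 H1) -(P3 D2 H2) E.
apply: eq_card => D'; apply/idP/idP.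
  by case/imsetP => D DD ->; apply: P1.
by move=> HD'; apply/imsetP; exists (phiMN_inv N D'); [apply: P2 | rewrite P4].
Qed.
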